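(* Let $(Q,\cdot)$ be a groupoid of order $n$ with elements ordered as $q_1,\dots,q_n$. If $Q$ is $(n-1)$-translatable with respect to this ordering, then $Q$ is commutative.
   Context: A finite groupoid $(Q,\cdot)$ with ordering $q_1,\dots,q_n$ of its elements is $k$-translatable ($1\le k<n$) with respect to this ordering if for all $i\in\{2,\dots,n\}$ and $j\in\{1,\dots,n\}$, $q_i\cdot q_j=q_{i-1}\cdot q_{j-k}$, where the index $j-k$ is taken modulo $n$ in $\{1,\dots,n\}$; i.e. each row of the Cayley table is obtained from the previous one by moving its last $k$ entries to the front. *)

(* Defs.v *)
From mathcomp Require Import all_boot.
Set Implicit Arguments. Unset Strict Implicit. Unset Printing Implicit Defensive.

(* insubd d m is the ordinal with value m when m < n (always the case here). *)
(* An ordering q_1,...,q_n of its elements is a bijection q : 'I_n -> T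
   (0-indexed: q 0, ..., q (n-1)).
   k-translatable (1 <= k < n): for all rows i in {1..n-1} (0-indexed: i = 1..n-1,
   i.e. paper's i in {2..n}) and all columns j,
      q_i * q_j = q_{i-1} * q_{(j - k) mod n}. *)
Definition k_translatable (T : finType) (op : T -> T -> T) (n : nat)
  (q : 'I_n -> T) (k : nat) : Prop :=
  (1 <= k < n) /\
  forall (i j : 'I_n), 0 < i ->
    op (q i) (q j) =
    op (q (insubd i i.-1)) (q (insubd j ((j + n - k) %% n))).

Definition commutative_groupoid (T : finType) (op : T -> T -> T) : Prop :=
  forall x y : T, op x y = op y x.

(* Main.v *)
Require Import Defs.
From mathcomp Require Import all_boot.
From mathcomp Require Import zify.

Lemma insubd_val n (d : 'I_n) x : x < n -> val (insubd d x) = x.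
Proof. by move=> h; rewrite val_insubd h. Qed.

Theorem proposition8p4 (T : finType) (op : T -> T -> T) (n : nat)
  (q : 'I_n -> T) :
  #|T| = n -> bijective q ->
  k_translatable op q n.-1 ->
  commutative_groupoid op.
Proof.
move=> _ [qi qK Kq] [/andP [h1 h2] H].
have n0 : 0 < n by case: n h1 h2 {H qi qK Kq q}.
have key : forall m (i j : 'I_n), val i = m ->
    op (q i) (q j) = op (q (insubd j 0)) (q (insubd j ((i + j) %% n))).
  elim=> [|m IH] i j Hi.
    congr (op (q _) (q _)); apply: val_inj; rewrite !insubd_val //.
      by rewrite Hi add0n modn_small.
    by rewrite ltn_mod.
  rewrite H; last by rewrite Hi.
  have Hm : m < n by apply: leq_trans (ltn_ord i); rewrite Hi.
  rewrite (IH (insubd i (i.-1)) (insubd j ((j + n - n.-1) %% n))); last first.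
    by rewrite insubd_val Hi.
  congr (op (q _) (q _)); apply: val_inj; rewrite !insubd_val ?ltn_mod ?Hi //.
  have -> : j + n - n.-1 = j.+1 by lia.
  rewrite /= modnDmr addnS addSn //.
move=> x y.
rewrite -(Kq x) -(Kq y).
rewrite (key _ (qi x) (qi y) erefl) (key _ (qi y) (qi x) erefl) addnC.
congr (op (q _) (q _)); apply: val_inj; rewrite !insubd_val ?ltn_mod //.
Qed.
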